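(* If there is an $n$-vertex weighted graph $G=(V,w)$ with $\mathrm{cdim}(G)=k$, then $D_{\mathrm{lin}}(\mathrm{MINCUT}_n)\ge k$.
   Context: An $n$-vertex weighted graph $G=(V,w)$ is given by $w\in\mathbb{R}_{\ge0}^{\binom n2}$ on unordered pairs of distinct vertices; $E=\{e:w(e)>0\}$, $m=|E|$. For $\emptyset\ne X\subsetneq V$, $\Delta(X)$ is the set of edges of $E$ with exactly one endpoint in $X$; $\mathcal{M}(G)$ is the set of minimum-weight cuts; $\chi(S)\in\{0,1\}^m$ is the characteristic vector indexed by $E$; $\mathrm{cdim}(G)=\dim\,\mathrm{span}\{\chi(S):S\in\mathcal{M}(G)\}$. In $\mathrm{MINCUT}_n$ the input is an $n$-vertex weighted graph and the output is its minimum cut weight. A linear query $x\in\mathbb{R}^{\binom n2}$ is answered with $\langle x,w\rangle$ (adaptively). $D_{\mathrm{lin}}(\mathrm{MINCUT}_n)$ is the minimum over deterministic linear query algorithms correct on all $n$-vertex weighted graphs of the worst-case number of queries. *)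

(* Defs.v *)
From HB Require Import structures.
From mathcomp Require Import all_boot all_order all_algebra.
From mathcomp Require Import reals.
Set Implicit Arguments. Unset Strict Implicit. Unset Printing Implicit Defensive.
Import Order.TTheory GRing.Theory Num.Theory.
Local Open Scope ring_scope.

(* Unordered pairs of distinct vertices of 'I_n, represented as (u,v) with u < v. *)
Definition vpair (n : nat) := {p : 'I_n * 'I_n | (p.1 < p.2)%N}.
HB.instance Definition _ n := [isSub for (@sval _ _ : vpair n -> _)].
HB.instance Definition _ n := [Finite of vpair n by <:].

Section MinCut.
Variables (R : realType) (n : nat).

Definition weighted_graph (w : vpair n -> R) : Prop := forall e, 0 <= w e.

Definition crosses (X : {set 'I_n}) (e : vpair n) : bool :=
  ((val e).1 \in X) != ((val e).2 \in X).

Definition is_cut (X : {set 'I_n}) : bool := (X != set0) && (X != [set: 'I_n]).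

(* weight of the cut Delta(X) (pairs of weight 0 contribute nothing) *)
Definition cutw (w : vpair n -> R) (X : {set 'I_n}) : R :=
  \sum_(e : vpair n | crosses X e) w e.

Definition is_min_cut (w : vpair n -> R) (X : {set 'I_n}) : bool :=
  is_cut X && [forall Y : {set 'I_n}, is_cut Y ==> (cutw w X <= cutw w Y)].

Definition is_mincut_value (w : vpair n -> R) (r : R) : Prop :=
  (exists X, is_cut X /\ cutw w X = r) /\ (forall X, is_cut X -> r <= cutw w X).

(* characteristic vector of Delta(X) (edges of E = support of w crossing X);
   written with coordinates over all pairs, zero outside E *)
Definition chi (w : vpair n -> R) (X : {set 'I_n}) (e : vpair n) : R :=
  if (w e != 0) && crosses X e then 1 else 0.

(* cdim(G) = dim span { chi(S) : S in M(G) } = rank of the matrix whose rows are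
   chi(Delta(X)) for minimum cuts Delta(X) (and 0 rows otherwise) *)
Definition cdim (w : vpair n -> R) : nat :=
  \rank (\matrix_(i < #|{set 'I_n}|, j < #|{: vpair n}|)
          (if is_min_cut w (enum_val i) then chi w (enum_val i) (enum_val j)
           else 0)).

Definition query (x w : vpair n -> R) : R := \sum_e x e * w e.

(* deterministic adaptive linear query algorithms (decision trees) *)
Inductive qtree : Type :=
| QLeaf of R
| QNode of (vpair n -> R) & (R -> qtree).

Fixpoint qrun (t : qtree) (w : vpair n -> R) : R * nat :=
  match t with
  | QLeaf r => (r, 0%N)
  | QNode x k => let: (r, c) := qrun (k (query x w)) w in (r, c.+1)
  end.

Definition qout t w := (qrun t w).1.
Definition qcost t w := (qrun t w).2.

Definition solves_mincut (t : qtree) : Prop :=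
  forall w, weighted_graph w -> is_mincut_value w (qout t w).

End MinCut.

(* Main.v *)
Require Import Defs.
From HB Require Import structures.
From mathcomp Require Import all_boot all_order all_algebra.
From mathcomp Require Import reals.
Import Order.TTheory GRing.Theory Num.Theory.
Local Open Scope ring_scope.

Section Aux.
Variables (R : realType) (n : nat).

Fixpoint qpath (t : qtree R n) (w : vpair n -> R) : seq (vpair n -> R) :=
  match t with
  | QLeaf _ => [::]
  | QNode x k => x :: qpath (k (query x w)) w
  end.

Lemma size_qpath t w : size (qpath t w) = qcost t w.
Proof.
elim: t => [r|x k IH] //=; rewrite /qcost /=.
by case E: (qrun _ _) => [r c] /=; rewrite IH /qcost E.
Qed.

Lemma qrun_same t w w' :
  (forall i, (i < size (qpath t w))%N ->
     query (nth (fun _ => 0) (qpath t w) i) w' =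
     query (nth (fun _ => 0) (qpath t w) i) w) ->
  qrun t w' = qrun t w.
Proof.
elim: t => [r|x k IH] //= H.
rewrite (H 0%N) // IH // => i Hi; exact: (H i.+1).
Qed.

Lemma sum_enum (F : vpair n -> R) :
  \sum_(e : vpair n) F e = \sum_(j < #|{: vpair n}|) F (enum_val j).
Proof.
rewrite (reindex (@enum_val _ (@predT (vpair n)))) //.
by apply: onW_bij; apply: enum_val_bij.
Qed.

End Aux.
Arguments qpath {R n}.
Arguments size_qpath {R n}.
Arguments qrun_same {R n}.
Arguments sum_enum {R n}.

From mathcomp Require Import ring lra.

Theorem corollary6 (R : realType) (n k : nat) :
  (exists w : vpair n -> R, weighted_graph w /\ cdim w = k) ->
  forall t : qtree R n, solves_mincut t ->
    exists w : vpair n -> R, weighted_graph w /\ (k <= qcost t w)%N.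
Proof.
move=> [w [Hw Hk]] t Ht; exists w; split => //.
rewrite -size_qpath; set p := qpath t w.
case: (leqP k (size p)) => // Hqk; exfalso.
move: Hk; rewrite /cdim; set A := \matrix_(_, _) _ => Hk.
set N := #|{: vpair n}|.
pose Xm : 'M[R]_(size p, N) := \matrix_(l, j)
  (nth (fun _ => 0) p l (enum_val j) * (if w (enum_val j) != 0 then 1 else 0)).
have nsub : ~~ (A <= Xm)%MS.
  apply/negP => /mxrankS; rewrite Hk => H.
  by have := leq_trans H (rank_leq_row Xm); rewrite leqNgt Hqk.
set C := cokermx Xm.
have nz : A *m C != 0 by rewrite -submxE.
have [i [j Hij]] : exists i j, (A *m C) i j != 0.
  case: (pickP (fun ij : 'I__ * 'I__ => (A *m C) ij.1 ij.2 != 0)) => [[i j] H|H].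
    by exists i, j.
  exfalso; move/negP: nz; apply; apply/eqP/matrixP => a b.
  by move: (H (a, b)) => /negbFE /eqP ->; rewrite mxE.
pose d e := C (enum_rank e) j * (if w e != 0 then 1 else 0).
have hd0 e : w e = 0 -> d e = 0 by move=> He; rewrite /d He eqxx mulr0.
have hq l : (l < size p)%N -> query (nth (fun _ => 0) p l) d = 0.
  move=> Hl; transitivity ((Xm *m C) (Ordinal Hl) j); last first.
    by rewrite /C mulmx_coker mxE.
  rewrite mxE /query sum_enum; apply: eq_bigr => j' _.
  by rewrite [Xm _ _]mxE /d enum_valK /= mulrA mulrAC.
move: Hij; rewrite mxE; set S := enum_val i => Hij.
have HS : is_min_cut w S.
  apply/negPn/negP => HS; move/negP: Hij; apply; apply/eqP.
  by apply: big1 => j' _; rewrite /A mxE -/S (negbTE HS) mul0r.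
set s := \sum_e chi w S e * d e.
have hs : s != 0.
  rewrite /s sum_enum; move: Hij; congr (_ != _); apply: eq_bigr => j' _.
  rewrite /A mxE -/S HS /d enum_valK /chi.
  by case: (w (enum_val j') != 0); case: (crosses S (enum_val j')); rewrite ?mul0r ?mulr1.
pose d2 e := - s * d e.
pose T := \sum_(e | w e != 0) `|d2 e| / w e.
have T0 : 0 <= T.
  by apply: sumr_ge0 => e _; apply: divr_ge0 => //; apply: normr_ge0.
pose eps := (1 + T)^-1.
have eps0 : 0 < eps by rewrite invr_gt0; lra.
have epsT : eps * (1 + T) = 1 by rewrite mulVf //; apply/eqP; lra.
pose w2 e := w e + eps * d2 e.
have Hw2 : weighted_graph w2.
  move=> e; rewrite /w2; case: (eqVneq (w e) 0) => He.
    by rewrite /d2 hd0 // mulr0 mulr0 addr0 He.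
  have wpos : 0 < w e by rewrite lt_def He Hw.
  have hT : `|d2 e| / w e <= T.
    rewrite /T (bigD1 e) //= lerDl; apply: sumr_ge0 => e' _.
    by apply: divr_ge0 => //; apply: normr_ge0.
  have ha : `|d2 e| <= T * w e by rewrite -ler_pdivrMr.
  have hb : - `|d2 e| <= d2 e by rewrite lerNl -normrN ler_norm.
  nra.
have Hrun : qrun t w2 = qrun t w.
  apply: qrun_same => l Hl.
  have -> : query (nth (fun _ => 0) p l) w2 =
     query (nth (fun _ => 0) p l) w + eps * (- s * query (nth (fun _ => 0) p l) d).
    rewrite /query !mulr_sumr -big_split; apply: eq_bigr => e _.
    rewrite /w2 /d2 /=; ring.
  by rewrite hq // mulr0 mulr0 addr0.
have [[X [HX HXc]] Hmin] := Ht w Hw.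
have [_ Hmin2] := Ht w2 Hw2.
have HSc : cutw w S = qout t w.
  move/andP: (HS) => [HSc /forallP /(_ X)]; rewrite HX /= => HSX.
  by apply/eqP; rewrite eq_le -HXc HSX /= HXc Hmin.
have := Hmin2 S (proj1 (andP HS)).
rewrite /qout Hrun -/(qout t w) -HSc.
have -> : cutw w2 S = cutw w S + eps * (- s * s).
  rewrite /cutw /w2 big_split /= -mulr_sumr; congr (_ + _ * _).
  rewrite /s mulr_sumr big_mkcond; apply: eq_bigr => e _.
  rewrite /chi /d2; case: (eqVneq (w e) 0) => He.
    by rewrite hd0 // !mulr0 if_same; case: (crosses S e); rewrite ?mul0r.
  by case: (crosses S e); rewrite /= ?mul1r ?mul0r ?mulr0.
have ss : 0 < s * s by rewrite -expr2 exprn_even_gt0.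
nra.
Qed.
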